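(* Let $-1 \le a < b \le 1$, and set $\alpha = \arccos a$, $\beta = \arccos b$ (so $0 \le \beta < \alpha \le \pi$). Define $g:[0,\pi]\to\mathbb{R}$ by $g(\theta)=1$ for $\theta\in(\beta,\alpha)$, $g(\theta)=\tfrac12$ for $\theta\in\{\alpha,\beta\}$, and $g(\theta)=0$ for $\theta\in[0,\pi]\setminus[\beta,\alpha]$. Let \[ c_0=\frac{1}{\pi}(\alpha-\beta),\qquad c_j=\frac{2}{\pi}\cdot\frac{\sin(j\alpha)-\sin(j\beta)}{j}\quad (j\ge 1), \] and for $k\ge 1$ let $g_k(\theta)=\sum_{j=0}^k c_j\cos(j\theta)$. Then for every integer $k \ge 1$ and every $\theta\in[0,\pi]$, \[ |g(\theta)-g_k(\theta)|\le \frac{J(\theta)}{\pi(k+1)}, \] where \[ J(\theta)=\begin{cases} \frac{1}{|\sin\frac{\theta+\alpha}{2}|}+\frac{1}{|\sin\frac{\theta-\alpha}{2}|}+\frac{1}{|\sin\frac{\theta+\beta}{2}|}+\frac{1}{|\sin\frac{\theta-\beta}{2}|}, & \theta\ne\alpha,\beta,\\[4pt] \frac{1}{|\sin\alpha|}+\frac{1}{|\sin\frac{\alpha+\beta}{2}|}+\frac{1}{|\sin\frac{\alpha-\beta}{2}|}, & \theta=\alpha,\\[4pt] \frac{1}{|\sin\beta|}+\frac{1}{|\sin\frac{\alpha+\beta}{2}|}+\frac{1}{|\sin\frac{\alpha-\beta}{2}|}, & \theta=\beta. \end{cases} \]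
   Context: Any term of the form $1/0$ in $J(\theta)$ is interpreted as $+\infty$, in which case the bound holds trivially. The function $g$ is $s(\cos\theta)$ where $s$ is the step function equal to $1$ on $(a,b)$, $\tfrac12$ at $a,b$, and $0$ elsewhere on $[-1,1]$; $g_k$ is the $k$-th partial sum of its Fourier cosine series (equivalently, the degree-$k$ Chebyshev truncation of $s$). *)

(* Defs.v *)
From Stdlib Require Import Reals.
Open Scope R_scope.

Definition g_fun (alpha beta theta : R) : R :=
  if Rlt_dec beta theta then
    (if Rlt_dec theta alpha then 1
     else if Req_EM_T theta alpha then /2 else 0)
  else if Req_EM_T theta beta then /2 else 0.

Definition coef (alpha beta : R) (j : nat) : R :=
  match j with
  | O => (alpha - beta) / PI
  | S _ => (2 / PI) * ((sin (INR j * alpha) - sin (INR j * beta)) / INR j)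
  end.

(* g_k(theta) = sum_{j=0}^k c_j cos(j theta)  (sum_f_R0 f k has k+1 terms). *)
Definition g_k (alpha beta : R) (k : nat) (theta : R) : R :=
  sum_f_R0 (fun j => coef alpha beta j * cos (INR j * theta)) k.

(* The denominators occurring in J(theta): J(theta) is finite iff all are nonzero. *)
Definition J_finite (alpha beta theta : R) : Prop :=
  if Req_EM_T theta alpha then
    sin alpha <> 0 /\ sin ((alpha + beta) / 2) <> 0 /\ sin ((alpha - beta) / 2) <> 0
  else if Req_EM_T theta beta then
    sin beta <> 0 /\ sin ((alpha + beta) / 2) <> 0 /\ sin ((alpha - beta) / 2) <> 0
  else
    sin ((theta + alpha) / 2) <> 0 /\ sin ((theta - alpha) / 2) <> 0 /\
    sin ((theta + beta) / 2) <> 0 /\ sin ((theta - beta) / 2) <> 0.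

Definition J_fun (alpha beta theta : R) : R :=
  if Req_EM_T theta alpha then
    / Rabs (sin alpha) + / Rabs (sin ((alpha + beta) / 2))
    + / Rabs (sin ((alpha - beta) / 2))
  else if Req_EM_T theta beta then
    / Rabs (sin beta) + / Rabs (sin ((alpha + beta) / 2))
    + / Rabs (sin ((alpha - beta) / 2))
  else
    / Rabs (sin ((theta + alpha) / 2)) + / Rabs (sin ((theta - alpha) / 2))
    + / Rabs (sin ((theta + beta) / 2)) + / Rabs (sin ((theta - beta) / 2)).

(* Main.v *)
From Stdlib Require Import Reals Lra Lia.
Require Import Defs.
From Coquelicot Require Import Coquelicot.
Open Scope R_scope.

Fixpoint Ssum (n : nat) (x : R) : R :=
  match n with
  | O => 0
  | S m => Ssum m x + sin (INR (S m) * x) / INR (S m)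
  end.
Lemma Ssum_S m x : Ssum (S m) x = Ssum m x + sin (INR (S m) * x) / INR (S m).
Proof. reflexivity. Qed.

Fixpoint Cs (n : nat) (x : R) : R :=
  match n with
  | O => 0
  | S m => Cs m x + cos (INR (S m) * x)
  end.
Lemma Cs_S m x : Cs (S m) x = Cs m x + cos (INR (S m) * x).
Proof. reflexivity. Qed.

Lemma dirichlet n t : 2 * sin (t/2) * (/2 + Cs n t) = sin ((INR n + /2) * t).
Proof.
  induction n as [|m IH].
  - simpl. replace ((0 + /2) * t) with (t/2) by field. field.
  - rewrite Cs_S.
    replace (2 * sin (t / 2) * (/ 2 + (Cs m t + cos (INR (S m) * t))))
      with (2 * sin (t / 2) * (/ 2 + Cs m t) + 2 * sin (t/2) * cos (INR (S m) * t)) by field.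
    rewrite IH. rewrite S_INR.
    replace ((INR m + / 2) * t) with ((INR m + 1) * t - t/2) by field.
    replace ((INR m + 1 + / 2) * t) with ((INR m + 1) * t + t/2) by field.
    rewrite sin_minus, sin_plus. field.
Qed.

Lemma derive_Ssum n t : is_derive (Ssum n) t (Cs n t).
Proof.
  induction n as [|m IH].
  - simpl. apply (is_derive_ext (fun _ => 0)). intros; reflexivity. evar (d : R). replace 0 with d. auto_derive. auto. unfold d; reflexivity. unfold d; reflexivity.
  - apply (is_derive_ext (fun t => Ssum m t + sin (INR (S m) * t) / INR (S m))).
    { intros; reflexivity. }
    rewrite Cs_S. apply (is_derive_plus (Ssum m)). exact IH.
    assert (HS : INR (S m) <> 0) by (apply not_0_INR; lia).
    set (j := INR (S m)) in *. auto_derive. auto. field. auto.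
Qed.

Lemma decr_lemma f df a b : a <= b ->
  (forall t, a <= t <= b -> is_derive f t (df t)) ->
  (forall t, a <= t <= b -> df t <= 0) -> f b <= f a.
Proof.
  intros Hab Hd Hs.
  destruct (MVT_gen f a b df) as [c [Hc E]].
  - intros t Ht. apply Hd. rewrite Rmin_left, Rmax_right in Ht; lra.
  - intros t Ht. apply continuity_pt_filterlim. apply (ex_derive_continuous f).
    exists (df t). apply Hd. rewrite Rmin_left, Rmax_right in Ht; lra.
  - rewrite Rmin_left, Rmax_right in Hc by lra.
    assert (df c * (b - a) <= 0).
    { assert (0 <= b - a) by lra. pose proof (Hs c Hc). nra. }
    lra.
Qed.

Lemma sin_nPI j : sin (INR j * PI) = 0.
Proof. apply sin_eq_0_1. exists (Z.of_nat j). rewrite INR_IZR_INZ. reflexivity. Qed.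

Lemma Ssum_PI n : Ssum n PI = 0.
Proof. induction n as [|m IH]. reflexivity. rewrite Ssum_S, IH, sin_nPI. field. apply not_0_INR; lia. Qed.

Lemma cos_half_PI n : cos ((INR n + /2) * PI) = 0.
Proof.
  replace ((INR n + /2) * PI) with (PI/2 + INR n * PI) by field.
  pose proof (sin_cos (INR n * PI)). rewrite sin_nPI in H. lra.
Qed.

Lemma conv_half n x : 0 < x <= PI ->
  Rabs (Ssum n x - (PI - x)/2) <= 2 / ((2 * INR n + 1) * sin (x/2)).
Proof.
  intros Hx.
  assert (Hq : 0 < 2 * INR n + 1) by (pose proof (pos_INR n); lra).
  assert (Hsin : forall t, x <= t <= PI -> 0 < sin (t/2)).
  { intros t Ht. apply sin_gt_0; lra. }
  assert (Hcos : forall t, x <= t <= PI -> 0 <= cos (t/2)).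
  { intros t Ht. apply cos_ge_0; lra. }
  assert (HC : forall t, sin (t/2) <> 0 -> Cs n t = sin ((INR n + /2) * t) / (2 * sin (t/2)) - /2).
  { intros t Ht. rewrite <- dirichlet. field. auto. }
  set (R1 := fun t => t/2 + (cos ((INR n + /2) * t) + 1) / ((2 * INR n + 1) * sin (t/2))).
  set (R2 := fun t => - t/2 + (1 - cos ((INR n + /2) * t)) / ((2 * INR n + 1) * sin (t/2))).
  assert (D1 : forall t, x <= t <= PI -> is_derive (fun t => Ssum n t + R1 t) t
     (- cos (t/2) * (cos ((INR n + /2) * t) + 1) / (2 * (2 * INR n + 1) * (sin (t/2))^2))).
  { intros t Ht. pose proof (Hsin t Ht) as Hs.
    assert (E : is_derive R1 t (/2 + (-(INR n + /2) * sin ((INR n + /2) * t) * ((2 * INR n + 1) * sin (t/2))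
        - (cos ((INR n + /2) * t) + 1) * ((2 * INR n + 1) * (cos (t/2) * /2))) / ((2 * INR n + 1) * sin (t/2))^2)).
    { unfold R1. set (j := INR n) in *. auto_derive; change (t * /2) with (t/2). apply Rmult_integral_contrapositive_currified; lra. field; repeat split; lra. }
    replace (- cos (t/2) * (cos ((INR n + /2) * t) + 1) / (2 * (2 * INR n + 1) * (sin (t/2))^2))
      with (Cs n t + (/2 + (-(INR n + /2) * sin ((INR n + /2) * t) * ((2 * INR n + 1) * sin (t/2))
        - (cos ((INR n + /2) * t) + 1) * ((2 * INR n + 1) * (cos (t/2) * /2))) / ((2 * INR n + 1) * sin (t/2))^2)).
    apply (is_derive_plus (Ssum n) R1). apply derive_Ssum. exact E.
    rewrite HC by lra. field. lra. }
  assert (D2 : forall t, x <= t <= PI -> is_derive (fun t => R2 t - Ssum n t) t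
     (- cos (t/2) * (1 - cos ((INR n + /2) * t)) / (2 * (2 * INR n + 1) * (sin (t/2))^2))).
  { intros t Ht. pose proof (Hsin t Ht) as Hs.
    assert (E : is_derive R2 t (-/2 + ((INR n + /2) * sin ((INR n + /2) * t) * ((2 * INR n + 1) * sin (t/2))
        - (1 - cos ((INR n + /2) * t)) * ((2 * INR n + 1) * (cos (t/2) * /2))) / ((2 * INR n + 1) * sin (t/2))^2)).
    { unfold R2. set (j := INR n) in *. auto_derive; change (t * /2) with (t/2). apply Rmult_integral_contrapositive_currified; lra. field; repeat split; lra. }
    replace (- cos (t/2) * (1 - cos ((INR n + /2) * t)) / (2 * (2 * INR n + 1) * (sin (t/2))^2))
      with ((-/2 + ((INR n + /2) * sin ((INR n + /2) * t) * ((2 * INR n + 1) * sin (t/2))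
        - (1 - cos ((INR n + /2) * t)) * ((2 * INR n + 1) * (cos (t/2) * /2))) / ((2 * INR n + 1) * sin (t/2))^2) - Cs n t).
    apply (is_derive_minus R2 (Ssum n)). exact E. apply derive_Ssum.
    rewrite HC by lra. field. lra. }
  assert (M1 : Ssum n PI + R1 PI <= Ssum n x + R1 x).
  { eapply (decr_lemma (fun t => Ssum n t + R1 t) _ x PI). lra. exact D1.
    intros t Ht. pose proof (Hsin t Ht). pose proof (Hcos t Ht).
    pose proof (COS_bound ((INR n + /2) * t)).
    unfold Rdiv. rewrite Ropp_mult_distr_l_reverse, Ropp_mult_distr_l_reverse.
    apply Ropp_le_cancel. rewrite Ropp_0, Ropp_involutive.
    apply Rmult_le_pos. apply Rmult_le_pos; lra.
    left; apply Rinv_0_lt_compat. apply Rmult_lt_0_compat. lra. apply pow_lt; auto. }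
  assert (M2 : R2 PI - Ssum n PI <= R2 x - Ssum n x).
  { eapply (decr_lemma (fun t => R2 t - Ssum n t) _ x PI). lra. exact D2.
    intros t Ht. pose proof (Hsin t Ht). pose proof (Hcos t Ht).
    pose proof (COS_bound ((INR n + /2) * t)).
    unfold Rdiv. rewrite Ropp_mult_distr_l_reverse, Ropp_mult_distr_l_reverse.
    apply Ropp_le_cancel. rewrite Ropp_0, Ropp_involutive.
    apply Rmult_le_pos. apply Rmult_le_pos; lra.
    left; apply Rinv_0_lt_compat. apply Rmult_lt_0_compat. lra. apply pow_lt; auto. }
  unfold R1, R2 in M1, M2. rewrite Ssum_PI, cos_half_PI in M1, M2.
  replace (PI / 2) with (PI / 2) in M1 by reflexivity. rewrite sin_PI2 in M1, M2.
  assert (Hs : 0 < sin (x/2)) by (apply Hsin; lra).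
  set (w := / ((2 * INR n + 1) * sin (x / 2))).
  assert (Hw : 0 < w) by (apply Rinv_0_lt_compat; apply Rmult_lt_0_compat; lra).
  assert (Hq' : 0 < / ((2 * INR n + 1) * 1)) by (apply Rinv_0_lt_compat; lra).
  unfold Rdiv in M1, M2. change (sin (x * /2)) with (sin (x/2)) in M1, M2. fold w in M1, M2.
  pose proof (COS_bound ((INR n + /2) * x)).
  replace (2 / ((2 * INR n + 1) * sin (x / 2))) with (2 * w) by (unfold w; field; lra).
  apply Rabs_le. split; nra.
Qed.

Definition Cc (x : R) (n : nat) : R := cos ((INR n + /2) * x) / (2 * sin (x / 2)).

Lemma sin_Cc x n : sin (x/2) <> 0 ->
  sin (INR (S n) * x) = Cc x n - Cc x (S n).
Proof.
  intros Hs. unfold Cc. rewrite S_INR.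
  replace ((INR n + / 2) * x) with ((INR n + 1) * x - x/2) by field.
  replace ((INR n + 1 + / 2) * x) with ((INR n + 1) * x + x/2) by field.
  rewrite cos_minus, cos_plus. field. auto.
Qed.

Lemma Cc_bound x n : sin (x/2) <> 0 -> Rabs (Cc x n) <= / (2 * Rabs (sin (x/2))).
Proof.
  intros Hs. unfold Cc. unfold Rdiv; rewrite Rabs_mult, Rabs_inv.
  rewrite Rabs_mult, (Rabs_right 2) by lra.
  rewrite Rmult_comm.
  assert (0 < Rabs (sin (x/2))) by (apply Rabs_pos_lt; auto).
  pose proof (COS_bound ((INR n + / 2) * x)).
  assert (Rabs (cos ((INR n + / 2) * x)) <= 1) by (apply Rabs_le; lra).
  rewrite <- (Rmult_1_r (/ (2 * Rabs (sin (x / 2))))) at 2.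
  apply Rmult_le_compat_l; [|auto]. left; apply Rinv_0_lt_compat; lra.
Qed.

Lemma abel_aux x k d : sin (x/2) <> 0 ->
  Rabs (Ssum (k + d) x - Ssum k x - Cc x k / INR (S k) + Cc x (k + d) / INR (S (k + d)))
  <= / (2 * Rabs (sin (x/2))) * (/ INR (S k) - / INR (S (k + d))).
Proof.
  intros Hs. induction d as [|d IH].
  - rewrite Nat.add_0_r. replace (Ssum k x - Ssum k x - Cc x k / INR (S k) + Cc x k / INR (S k)) with 0 by (field; apply not_0_INR; lia).
    rewrite Rabs_R0. lra.
  - rewrite Nat.add_succ_r. rewrite Ssum_S. rewrite (sin_Cc x (k+d) Hs).
    set (n := (k + d)%nat) in *.
    assert (Hn : 0 < INR (S n)) by (apply lt_0_INR; lia).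
    assert (Hn2 : 0 < INR (S (S n))) by (apply lt_0_INR; lia).
    assert (Hk : 0 < INR (S k)) by (apply lt_0_INR; lia).
    assert (E : Ssum n x + (Cc x n - Cc x (S n)) / INR (S n) - Ssum k x - Cc x k / INR (S k) +
       Cc x (S n) / INR (S (S n)) =
       (Ssum n x - Ssum k x - Cc x k / INR (S k) + Cc x n / INR (S n))
       - Cc x (S n) * (/ INR (S n) - / INR (S (S n)))) by (field; lra).
    rewrite E.
    eapply Rle_trans; [apply Rabs_triang|]. rewrite Rabs_Ropp, Rabs_mult.
    assert (Hd : 0 <= / INR (S n) - / INR (S (S n))).
    { assert (/ INR (S (S n)) <= / INR (S n)); [|lra].
      apply Rinv_le_contravar; auto. rewrite (S_INR (S n)). lra. }
    rewrite (Rabs_right (/ INR (S n) - / INR (S (S n)))) by lra.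
    pose proof (Cc_bound x (S n) Hs).
    assert (Rabs (Cc x (S n)) * (/ INR (S n) - / INR (S (S n))) <=
      / (2 * Rabs (sin (x / 2))) * (/ INR (S n) - / INR (S (S n)))) by (apply Rmult_le_compat_r; auto).
    lra.
Qed.

Lemma abel x k n : sin (x/2) <> 0 -> (k <= n)%nat ->
  Rabs (Ssum n x - Ssum k x) <= / (INR (S k) * Rabs (sin (x/2))).
Proof.
  intros Hs Hkn. replace n with (k + (n - k))%nat by lia.
  set (d := (n - k)%nat). pose proof (abel_aux x k d Hs) as H.
  set (m := (k + d)%nat) in *.
  assert (Hm : 0 < INR (S m)) by (apply lt_0_INR; lia).
  assert (Hk : 0 < INR (S k)) by (apply lt_0_INR; lia).
  assert (Hs' : 0 < Rabs (sin (x/2))) by (apply Rabs_pos_lt; auto).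
  set (M := / (2 * Rabs (sin (x/2)))).
  assert (HM : 0 < M) by (apply Rinv_0_lt_compat; lra).
  pose proof (Cc_bound x k Hs). pose proof (Cc_bound x m Hs). fold M in H0, H1, H.
  assert (A1 : Rabs (Cc x k / INR (S k)) <= M * / INR (S k)).
  { unfold Rdiv. rewrite Rabs_mult, (Rabs_right (/ INR (S k))) by (left; apply Rinv_0_lt_compat; lra).
    apply Rmult_le_compat_r; auto. left; apply Rinv_0_lt_compat; lra. }
  assert (A2 : Rabs (Cc x m / INR (S m)) <= M * / INR (S m)).
  { unfold Rdiv. rewrite Rabs_mult, (Rabs_right (/ INR (S m))) by (left; apply Rinv_0_lt_compat; lra).
    apply Rmult_le_compat_r; auto. left; apply Rinv_0_lt_compat; lra. }
  replace (Ssum m x - Ssum k x) with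
    ((Ssum m x - Ssum k x - Cc x k / INR (S k) + Cc x m / INR (S m)) + Cc x k / INR (S k) - Cc x m / INR (S m)) by (field; lra).
  eapply Rle_trans. apply Rabs_triang. eapply Rle_trans. apply Rplus_le_compat_r. apply Rabs_triang.
  rewrite Rabs_Ropp.
  replace (/ (INR (S k) * Rabs (sin (x / 2)))) with (2 * M * / INR (S k)) by (unfold M; field; lra).
  lra.
Qed.

Lemma Ssum_neg n x : Ssum n (- x) = - Ssum n x.
Proof.
  induction n as [|m IH]. simpl; lra.
  rewrite !Ssum_S, IH. replace (INR (S m) * - x) with (- (INR (S m) * x)) by ring.
  rewrite sin_neg. field. apply not_0_INR; lia.
Qed.

Lemma Ssum_refl n x : Ssum n (2 * PI - x) = - Ssum n x.
Proof.
  induction n as [|m IH]. simpl; lra.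
  rewrite !Ssum_S, IH.
  replace (INR (S m) * (2 * PI - x)) with (- (INR (S m) * x) + 2 * INR (S m) * PI) by ring.
  rewrite sin_period, sin_neg. field. apply not_0_INR; lia.
Qed.

Lemma conv_full n x : 0 < x < 2 * PI ->
  Rabs (Ssum n x - (PI - x)/2) <= 2 / ((2 * INR n + 1) * Rabs (sin (x/2))).
Proof.
  intros Hx. pose proof PI_RGT_0 as HPI. destruct (Rle_lt_dec x PI) as [H|H].
  - assert (0 < sin (x/2)) by (apply sin_gt_0; lra).
    rewrite (Rabs_right (sin (x/2))) by lra. apply conv_half; lra.
  - pose proof (conv_half n (2 * PI - x)) as C.
    rewrite Ssum_refl in C.
    replace ((2 * PI - x)/2) with (PI - x/2) in C by field. rewrite sin_PI_x in C.
    assert (0 < sin (x/2)) by (apply sin_gt_0; lra).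
    rewrite (Rabs_right (sin (x/2))) by lra.
    replace (Ssum n x - (PI - x) / 2) with (- (- Ssum n x - (PI - (2 * PI - x)) / 2)) by field.
    rewrite Rabs_Ropp. apply C. lra.
Qed.

Lemma lim_lemma A B c k : 0 <= c -> (forall n, (k <= n)%nat -> A <= B + c / (2 * INR n + 1)) -> A <= B.
Proof.
  intros Hc H. destruct (Rle_lt_dec A B) as [|Hlt]; auto. exfalso.
  destruct (INR_archimed (A - B) c) as [N HN]; [lra|].
  pose proof (H (N + k)%nat ltac:(lia)) as HH.
  rewrite plus_INR in HH. pose proof (pos_INR k). pose proof (pos_INR N).
  assert (c / (2 * (INR N + INR k) + 1) < A - B).
  { apply (Rmult_lt_reg_r (2 * (INR N + INR k) + 1)). lra.
    unfold Rdiv. rewrite Rmult_assoc, Rinv_l by lra. nra. }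
  lra.
Qed.

Lemma tail_pos k x : 0 < x < 2 * PI ->
  Rabs ((PI - x)/2 - Ssum k x) <= / (INR (S k) * Rabs (sin (x/2))).
Proof.
  intros Hx.
  assert (Hs : sin (x/2) <> 0).
  { assert (0 < sin (x/2)) by (apply sin_gt_0; lra). lra. }
  assert (Hs' : 0 < Rabs (sin (x/2))) by (apply Rabs_pos_lt; auto).
  apply (lim_lemma _ _ (2 / Rabs (sin (x/2))) k). left; apply Rdiv_lt_0_compat; lra.
  intros n Hn. pose proof (abel x k n Hs Hn). pose proof (conv_full n x Hx).
  replace ((PI - x)/2 - Ssum k x) with ((Ssum n x - Ssum k x) - (Ssum n x - (PI - x)/2)) by field.
  eapply Rle_trans. apply Rabs_triang. rewrite Rabs_Ropp.
  replace (2 / Rabs (sin (x / 2)) / (2 * INR n + 1)) with (2 / ((2 * INR n + 1) * Rabs (sin (x / 2)))).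
  lra. field. pose proof (pos_INR n). lra.
Qed.

Lemma tail_neg k x : - (2 * PI) < x < 0 ->
  Rabs (- (PI + x)/2 - Ssum k x) <= / (INR (S k) * Rabs (sin (x/2))).
Proof.
  intros Hx. pose proof (tail_pos k (- x) ltac:(lra)) as H.
  rewrite Ssum_neg in H. replace (- x / 2) with (- (x/2)) in H by field.
  rewrite sin_neg, Rabs_Ropp in H.
  replace (- (PI + x)/2 - Ssum k x) with (- ((PI - - x) / 2 - - Ssum k x)) by field.
  rewrite Rabs_Ropp. exact H.
Qed.

Lemma Ssum_0 n : Ssum n 0 = 0.
Proof. induction n as [|m IH]. reflexivity. rewrite Ssum_S, IH, Rmult_0_r, sin_0. field. apply not_0_INR; lia. Qed.

Lemma gk_S al be m th : g_k al be (S m) th = g_k al be m th + coef al be (S m) * cos (INR (S m) * th).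
Proof. reflexivity. Qed.

Lemma gk_expand al be k th : g_k al be k th =
  (al - be)/PI + (Ssum k (al + th) + Ssum k (al - th) - Ssum k (be + th) - Ssum k (be - th))/PI.
Proof.
  pose proof PI_RGT_0.
  induction k as [|m IH].
  - unfold g_k. simpl sum_f_R0. simpl coef. simpl INR. simpl Ssum. rewrite Rmult_0_l, cos_0. field. lra.
  - rewrite gk_S, IH, !Ssum_S.
    change (coef al be (S m)) with ((2 / PI) * ((sin (INR (S m) * al) - sin (INR (S m) * be)) / INR (S m))).
    assert (HS : INR (S m) <> 0) by (apply not_0_INR; lia).
    set (j := INR (S m)) in *.
    rewrite !Rmult_plus_distr_l, !Rmult_minus_distr_l, !sin_plus, !sin_minus. field. lra.
Qed.

Lemma abs_inv x e : Rabs x <= e -> - e <= x <= e.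
Proof. intros H. pose proof (Rle_abs x). pose proof (Rle_abs (-x)). rewrite Rabs_Ropp in *. lra. Qed.

Lemma comb4 gv c s1 s2 s3 s4 v1 v2 v3 v4 e1 e2 e3 e4 :
  gv = c + (v1 + v2 - v3 - v4)/PI ->
  Rabs (v1 - s1) <= e1 -> Rabs (v2 - s2) <= e2 -> Rabs (v3 - s3) <= e3 -> Rabs (v4 - s4) <= e4 ->
  Rabs (gv - (c + (s1 + s2 - s3 - s4)/PI)) <= (e1 + e2 + e3 + e4)/PI.
Proof.
  intros Hg H1 H2 H3 H4. pose proof PI_RGT_0.
  apply abs_inv in H1, H2, H3, H4.
  replace (gv - (c + (s1 + s2 - s3 - s4) / PI)) with (((v1 - s1) + (v2 - s2) - (v3 - s3) - (v4 - s4)) * / PI)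
    by (rewrite Hg; field; lra).
  unfold Rdiv. assert (0 < / PI) by (apply Rinv_0_lt_compat; lra).
  apply Rabs_le. split; nra.
Qed.

Lemma sx_ne x : sin (x/2) <> 0 -> x <> 0 /\ x <> 2 * PI.
Proof.
  intros H. split; intro E; apply H; rewrite E.
  - replace (0/2) with 0 by field. apply sin_0.
  - replace (2 * PI / 2) with PI by field. apply sin_PI.
Qed.

Lemma abs_sin_swap u v : Rabs (sin ((u - v)/2)) = Rabs (sin ((v - u)/2)).
Proof. replace ((u - v)/2) with (- ((v - u)/2)) by field. rewrite sin_neg, Rabs_Ropp. reflexivity. Qed.

Ltac gcase := unfold g_fun; repeat match goal with
  | |- context [Rlt_dec ?a ?b] => destruct (Rlt_dec a b)
  | |- context [Req_EM_T ?a ?b] => destruct (Req_EM_T a b) end; try lra.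

Theorem theorem3p2 (a b : R) (k : nat) (theta : R) :
  -1 <= a -> a < b -> b <= 1 -> (1 <= k)%nat ->
  0 <= theta <= PI ->
  J_finite (acos a) (acos b) theta ->
  Rabs (g_fun (acos a) (acos b) theta - g_k (acos a) (acos b) k theta)
    <= J_fun (acos a) (acos b) theta / (PI * INR (k + 1)).
Proof.
  intros Ha Hab Hb Hk Hth HJ.
  pose proof PI_RGT_0 as HPI.
  assert (Hlt : acos b < acos a).
  { destruct (Rlt_le_dec (acos b) (acos a)) as [|Hle]; auto. exfalso.
    pose proof (acos_bound a). pose proof (acos_bound b).
    destruct (Req_dec (acos a) (acos b)) as [E|NE].
    - assert (cos (acos a) = cos (acos b)) by (rewrite E; reflexivity).
      rewrite !cos_acos in H1 by lra. lra.
    - pose proof (cos_decreasing_1 (acos a) (acos b) ltac:(lra) ltac:(lra) ltac:(lra) ltac:(lra) ltac:(lra)).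
      rewrite !cos_acos in H1 by lra. lra. }
  pose proof (acos_bound a) as Hal. pose proof (acos_bound b) as Hbe.
  set (al := acos a) in *. set (be := acos b) in *.
  rewrite gk_expand. rewrite Nat.add_1_r.
  assert (Hk1 : 0 < INR (S k)) by (apply lt_0_INR; lia).
  unfold J_finite in HJ. unfold J_fun.
  destruct (Req_EM_T theta al) as [Eal|Nal].
  -
    destruct HJ as [S1 [S2 S3]]. subst theta.
    assert (Hapi : al <> PI) by (intro E; apply S1; rewrite E; apply sin_PI).
    assert (Hga : g_fun al be al = /2) by gcase.
    rewrite Hga.
    replace (al - al) with 0 by ring. rewrite Ssum_0.
    assert (Ra : Rabs (sin ((al + al)/2)) = Rabs (sin al)) by (f_equal; f_equal; field).
    assert (Rb : Rabs (sin ((be + al)/2)) = Rabs (sin ((al + be)/2))) by (f_equal; f_equal; field).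
    assert (Rc : Rabs (sin ((be - al)/2)) = Rabs (sin ((al - be)/2))) by apply abs_sin_swap.
    assert (P1 : 0 < Rabs (sin al)) by (apply Rabs_pos_lt; auto).
    assert (P2 : 0 < Rabs (sin ((al + be)/2))) by (apply Rabs_pos_lt; auto).
    assert (P3 : 0 < Rabs (sin ((al - be)/2))) by (apply Rabs_pos_lt; auto).
    eapply Rle_trans.
    + apply (comb4 _ _ _ _ _ _ ((PI - (al + al))/2) 0 ((PI - (be + al))/2) (- (PI + (be - al))/2)).
      * field. lra.
      * apply tail_pos. lra.
      * replace (0 - 0) with 0 by ring. rewrite Rabs_R0. apply Rle_refl.
      * apply tail_pos. lra.
      * apply tail_neg. lra.
    + rewrite Ra, Rb, Rc. right. field. lra.
  - destruct (Req_EM_T theta be) as [Ebe|Nbe].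
    +
      destruct HJ as [S1 [S2 S3]]. subst theta.
      assert (Hb0 : be <> 0) by (intro E; apply S1; rewrite E; apply sin_0).
      assert (Hga : g_fun al be be = /2) by gcase.
      rewrite Hga.
      replace (be - be) with 0 by ring. rewrite Ssum_0.
      assert (Ra : Rabs (sin ((be + be)/2)) = Rabs (sin be)) by (f_equal; f_equal; field).
      assert (P1 : 0 < Rabs (sin be)) by (apply Rabs_pos_lt; auto).
      assert (P2 : 0 < Rabs (sin ((al + be)/2))) by (apply Rabs_pos_lt; auto).
      assert (P3 : 0 < Rabs (sin ((al - be)/2))) by (apply Rabs_pos_lt; auto).
      eapply Rle_trans.
      * apply (comb4 _ _ _ _ _ _ ((PI - (al + be))/2) ((PI - (al - be))/2) ((PI - (be + be))/2) 0).
        -- field. lra.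
        -- apply tail_pos. lra.
        -- apply tail_pos. lra.
        -- apply tail_pos. lra.
        -- replace (0 - 0) with 0 by ring. rewrite Rabs_R0. apply Rle_refl.
      * rewrite Ra. right. field. lra.
    + destruct HJ as [S1 [S2 [S3 S4]]].
      destruct (sx_ne _ S1) as [N1 N1']. destruct (sx_ne _ S2) as [N2 N2'].
      destruct (sx_ne _ S3) as [N3 N3']. destruct (sx_ne _ S4) as [N4 N4'].
      assert (Ra : Rabs (sin ((al + theta)/2)) = Rabs (sin ((theta + al)/2))) by (f_equal; f_equal; field).
      assert (Rb : Rabs (sin ((al - theta)/2)) = Rabs (sin ((theta - al)/2))) by apply abs_sin_swap.
      assert (Rc : Rabs (sin ((be + theta)/2)) = Rabs (sin ((theta + be)/2))) by (f_equal; f_equal; field).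
      assert (Rd : Rabs (sin ((be - theta)/2)) = Rabs (sin ((theta - be)/2))) by apply abs_sin_swap.
      assert (P1 : 0 < Rabs (sin ((theta + al)/2))) by (apply Rabs_pos_lt; auto).
      assert (P2 : 0 < Rabs (sin ((theta - al)/2))) by (apply Rabs_pos_lt; auto).
      assert (P3 : 0 < Rabs (sin ((theta + be)/2))) by (apply Rabs_pos_lt; auto).
      assert (P4 : 0 < Rabs (sin ((theta - be)/2))) by (apply Rabs_pos_lt; auto).
      assert (Fin : forall e1 e2 e3 e4,
        e1 = / (INR (S k) * Rabs (sin ((al + theta) / 2))) ->
        e2 = / (INR (S k) * Rabs (sin ((al - theta) / 2))) ->
        e3 = / (INR (S k) * Rabs (sin ((be + theta) / 2))) ->
        e4 = / (INR (S k) * Rabs (sin ((be - theta) / 2))) ->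
        (e1 + e2 + e3 + e4) / PI <=
        (/ Rabs (sin ((theta + al) / 2)) + / Rabs (sin ((theta - al) / 2)) +
         / Rabs (sin ((theta + be) / 2)) + / Rabs (sin ((theta - be) / 2))) / (PI * INR (S k))).
      { intros e1 e2 e3 e4 -> -> -> ->. rewrite Ra, Rb, Rc, Rd. right. field. repeat split; lra. }
      destruct (Rtotal_order theta be) as [Tb|[Tb|Tb]]; [|contradiction|].
      *
        assert (Hg : g_fun al be theta = 0) by gcase. rewrite Hg.
        eapply Rle_trans; [|apply Fin; reflexivity].
        apply (comb4 _ _ _ _ _ _ ((PI - (al + theta))/2) ((PI - (al - theta))/2) ((PI - (be + theta))/2) ((PI - (be - theta))/2)).
        -- field. lra.
        -- apply tail_pos. lra.
        -- apply tail_pos. lra.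
        -- apply tail_pos. lra.
        -- apply tail_pos. lra.
      * destruct (Rtotal_order theta al) as [Ta|[Ta|Ta]]; [|contradiction|].
        -- assert (Hg : g_fun al be theta = 1) by gcase. rewrite Hg.
           eapply Rle_trans; [|apply Fin; reflexivity].
           apply (comb4 _ _ _ _ _ _ ((PI - (al + theta))/2) ((PI - (al - theta))/2) ((PI - (be + theta))/2) (- (PI + (be - theta))/2)).
           ++ field. lra.
           ++ apply tail_pos. lra.
           ++ apply tail_pos. lra.
           ++ apply tail_pos. lra.
           ++ apply tail_neg. lra.
        -- assert (Hg : g_fun al be theta = 0) by gcase. rewrite Hg.
           eapply Rle_trans; [|apply Fin; reflexivity].
           apply (comb4 _ _ _ _ _ _ ((PI - (al + theta))/2) (- (PI + (al - theta))/2) ((PI - (be + theta))/2) (- (PI + (be - theta))/2)).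
           ++ field. lra.
           ++ apply tail_pos. lra.
           ++ apply tail_neg. lra.
           ++ apply tail_pos. lra.
           ++ apply tail_neg. lra.
Qed.
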